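(* Let $G$ be split reductive with root system of type $C_r$, $r\geqslant2$, with simple roots $\alpha_1,\dots,\alpha_r$ in Bourbaki labelling ($\alpha_r$ long), and let $\widetilde G$ be an $n$-fold Brylinski--Deligne cover associated with a Weyl-invariant quadratic form $Q$. Partition $\Phi_+=\Phi_{+,I}\sqcup\Phi_{+,II}\sqcup\Phi_{+,III}$ with $\Phi_{+,I}=\{\sum_{i\leqslant k<j}\alpha_k:1\leqslant i<j\leqslant r\}$, $\Phi_{+,II}=\{\sum_{i\leqslant k<j}\alpha_k+2\sum_{j\leqslant k<r}\alpha_k+\alpha_r:1\leqslant i<j\leqslant r\}$, $\Phi_{+,III}=\{2\sum_{i\leqslant k<r}\alpha_k+\alpha_r:1\leqslant i\leqslant r\}$, and $\Phi^\vee_+=\Phi^\vee_{+,I}\sqcup\Phi^\vee_{+,II}\sqcup\Phi^\vee_{+,III}$ with $\Phi^\vee_{+,I}=\{\sum_{i\leqslant k\leqslant r}\alpha^\vee_k:1\leqslant i\leqslant r\}$, $\Phi^\vee_{+,II}=\{\sum_{i\leqslant k<j}\alpha_k^\vee:1\leqslant i<j\leqslant r\}$, $\Phi^\vee_{+,III}=\{\sum_{i\leqslant k<j}\alpha^\vee_k+2\sum_{j\leqslant k\leqslant r}\alpha^\vee_k:1\leqslant i<j\leqslant r\}$. If $2\tilde n_{\alpha_i}=\tilde n_{\alpha_r}$ for all $1\leqslant i<r$, then necessarily $\tilde n_{\alpha_i}=n_{\alpha_i}$ for all $1\leqslant i\leqslant r$ and $$f_X(\Phi^\vee_{+,I})=f_Y(\Phi_{+,III}),\quad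 f_X(\Phi^\vee_{+,II})=f_Y(\Phi_{+,I}),\quad f_X(\Phi^\vee_{+,III})=f_Y(\Phi_{+,II});$$ in this case $f_X(\Phi^\vee_+)=\frac{[1,2r-1]}{2n_{\alpha_1}}\cup\frac{[2,2r-2]}{n_{\alpha_1}}=f_Y(\Phi_+)$. If $\tilde n_\alpha$ is constant on $\alpha\in\Delta$, then $f_X(\Phi^\vee_+)=\frac{1}{\tilde n_\alpha}[1,2r-1]=f_Y(\Phi_+)$.
   Context: $[a,b]$ denotes $\{a,a+1,\dots,b\}$ and $\frac{S}{m}=\{s/m:s\in S\}$. Notation: $\omega_\alpha$ fundamental weights, $\omega^\vee_\alpha$ fundamental coweights, $\rho^\vee=\sum_{\alpha\in\Delta}\omega_\alpha^\vee$. $B_Q(y,z)=Q(y+z)-Q(y)-Q(z)$, $Y_{Q,n}=\{y\in Y:B_Q(y,z)\in n\mathbf Z\ \forall z\in Y\}$, $n_\alpha=n/\gcd(n,Q(\alpha^\vee))$, and $\tilde n_\alpha\in\{n_\alpha,n_\alpha/2\}$ ($\alpha\in\Phi$) defined by $\mathbf Z\alpha^\vee\cap Y_{Q,n}=\mathbf Z\tilde n_\alpha\alpha^\vee$. $f_X:\Phi_+^\vee\to\mathbf Q$, $f_X(\beta^\vee)=\sum_{\alpha\in\Delta}\langle\omega_\alpha/\tilde n_\alpha,\beta^\vee\rangle$; $f_Y:\Phi_+\to\mathbf Q$, $f_Y(\beta)=\langle\rho^\vee,\beta\rangle/\tilde n_\beta$. *)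

(* Defs.v *)
From mathcomp Require Import all_boot all_order all_algebra.
Set Implicit Arguments. Unset Strict Implicit. Unset Printing Implicit Defensive.
Import Order.TTheory GRing.Theory Num.Theory.
Local Open Scope ring_scope.

(* Cocharacter lattice Y and character lattice X are both modelled as Z^m
   ('rV[int]_m), with the perfect pairing <x, y> = sum_k x_k y_k. *)
Definition pairing (m : nat) (x y : 'rV[int]_m) : int := \sum_(k < m) x 0 k * y 0 k.

(* Cartan integers <alpha_i, alpha_j^vee> of type C_r, Bourbaki labelling
   (indices 1..r, alpha_r long). *)
Definition cartanC (r i j : nat) : int :=
  if i == j then 2
  else if (i == r) && (j == r.-1) then -2
  else if (i == j.+1) || (j == i.+1) then -1
  else 0.

(* Indexing of the positive roots of C_r (i, j are 1-based). *)
Inductive proot := PI of nat & nat | PII of nat & nat | PIII of nat.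

(* The paper's classes: beta in Phi_{+,I} <-> beta = root (PI i j);
   Phi_{+,II} <-> PII i j; Phi_{+,III} <-> PIII i.  The coroot of PIII i lies
   in Phi^vee_{+,I}, of PI i j in Phi^vee_{+,II}, of PII i j in Phi^vee_{+,III}. *)
Definition isI (r : nat) (p : proot) : bool :=
  if p is PI i j then (1 <= i)%N && (i < j)%N && (j <= r)%N else false.
Definition isII (r : nat) (p : proot) : bool :=
  if p is PII i j then (1 <= i)%N && (i < j)%N && (j <= r)%N else false.
Definition isIII (r : nat) (p : proot) : bool :=
  if p is PIII i then (1 <= i)%N && (i <= r)%N else false.
Definition isPos (r : nat) (p : proot) : bool := [|| isI r p, isII r p | isIII r p].

Definition rootc (r : nat) (p : proot) (k : nat) : int :=
  match p with
  | PI i j => if (i <= k < j)%N then 1 else 0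
  | PII i j => if (i <= k < j)%N then 1 else if (j <= k < r)%N then 2
               else if k == r then 1 else 0
  | PIII i => if (i <= k < r)%N then 2 else if k == r then 1 else 0
  end.

Definition corootc (r : nat) (p : proot) (k : nat) : int :=
  match p with
  | PI i j => if (i <= k < j)%N then 1 else 0
  | PII i j => if (i <= k < j)%N then 1 else if (j <= k <= r)%N then 2 else 0
  | PIII i => if (i <= k <= r)%N then 1 else 0
  end.

Definition comb (r m : nat) (v : nat -> 'rV[int]_m) (c : nat -> int) : 'rV[int]_m :=
  \sum_(1 <= k < r.+1) c k *: v k.

Definition rootv r m (alpha : nat -> 'rV[int]_m) p := comb r alpha (rootc r p).
Definition corootv r m (alphav : nat -> 'rV[int]_m) p := comb r alphav (corootc r p).

Definition BQ m (Q : 'rV[int]_m -> int) (y z : 'rV[int]_m) : int := Q (y + z) - Q y - Q z.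

Definition quadratic_form m (Q : 'rV[int]_m -> int) : Prop :=
  (forall (k : int) y, Q (k *: y) = k ^+ 2 * Q y) /\
  (forall y1 y2 z, BQ Q (y1 + y2) z = BQ Q y1 z + BQ Q y2 z).

Definition weyl_invariant r m (alpha alphav : nat -> 'rV[int]_m) (Q : 'rV[int]_m -> int) :=
  forall p, isPos r p -> forall y,
    Q (y - pairing (rootv r alpha p) y *: corootv r alphav p) = Q y.

Definition inYQn m (Q : 'rV[int]_m -> int) (n : nat) (y : 'rV[int]_m) : Prop :=
  forall z, (n%:Z %| BQ Q y z)%Z.

Definition n_of m (Q : 'rV[int]_m -> int) (n : nat) (y : 'rV[int]_m) : nat :=
  (n %/ gcdn n `|Q y|)%N.

(* f_X(beta^vee) = sum_{alpha in Delta} <omega_alpha / nt_alpha, beta^vee>;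
   <omega_{alpha_k}, beta^vee> is the coefficient of alpha_k^vee in beta^vee. *)
Definition fX r m (alphav : nat -> 'rV[int]_m) (nt : 'rV[int]_m -> nat) (p : proot) : rat :=
  \sum_(1 <= k < r.+1) (corootc r p k)%:~R / (nt (alphav k))%:R.

(* f_Y(beta) = <rho^vee, beta> / nt_beta, with <rho^vee, beta> = height of beta. *)
Definition fY r m (alphav : nat -> 'rV[int]_m) (nt : 'rV[int]_m -> nat) (p : proot) : rat :=
  (\sum_(1 <= k < r.+1) rootc r p k)%:~R / (nt (corootv r alphav p))%:R.

Definition fX_img r m alphav nt (C : proot -> bool) : rat -> Prop :=
  fun q => exists p, C p /\ q = @fX r m alphav nt p.
Definition fY_img r m alphav nt (C : proot -> bool) : rat -> Prop :=
  fun q => exists p, C p /\ q = @fY r m alphav nt p.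

Definition seteq (A B : rat -> Prop) : Prop := forall q, A q <-> B q.

Definition intdiv_set (a b : nat) (d : rat) : rat -> Prop :=
  fun q => exists k : nat, (a <= k <= b)%N /\ q = k%:R / d.

(* Main.v *)
Require Import Defs.
From mathcomp Require Import zify ring lra.
From mathcomp Require Import all_boot all_order all_algebra.
Import Order.TTheory GRing.Theory Num.Theory.
Local Open Scope ring_scope.

Lemma sum_nat_pt (V : zmodType) a b m (F : nat -> V) :
  (forall k, (a <= k < b)%N -> k != m -> F k = 0) ->
  \sum_(a <= k < b) F k = if (a <= m < b)%N then F m else 0.
Proof.
move=> HF; case: ifP => Hm; last first.
  rewrite big_nat_cond big1 // => k /andP[/andP[H1 H2] _]; apply: HF; lia.
case/andP: Hm => Ham Hmb.
  rewrite (big_cat_nat (n:=m)) ?(ltnW Hmb) //= [X in _ + X]big_ltn //=.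
  rewrite [X in X + _]big_nat_cond [X in _ + (_ + X)]big_nat_cond !big1 ?add0r ?addr0 //.
all: move=> k /andP[/andP[H1 H2] _]; apply: HF; lia.
Qed.

Lemma sum_nat_cst (V : zmodType) a b (x : V) (F : nat -> V) :
  (forall k, (a <= k < b)%N -> F k = x) ->
  \sum_(a <= k < b) F k = x *+ (b - a).
Proof. by move=> HF; rewrite (eq_big_nat _ _ HF) sumr_const_nat. Qed.

Lemma pairingDr m (x y z : 'rV[int]_m) : pairing x (y + z) = pairing x y + pairing x z.
Proof. by rewrite /pairing -big_split; apply: eq_bigr => k _; rewrite mxE mulrDr. Qed.

Lemma pairingZr m (x y : 'rV[int]_m) c : pairing x (c *: y) = c * pairing x y.
Proof. rewrite /pairing mulr_sumr; apply: eq_bigr => k _; rewrite mxE; ring. Qed.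

Lemma pairing_comb r m (v : nat -> 'rV[int]_m) c z :
  pairing (comb r v c) z = \sum_(1 <= k < r.+1) c k * pairing (v k) z.
Proof.
rewrite /pairing /comb.
under eq_bigr => i _ do rewrite summxE mulr_suml.
rewrite exchange_big /=; apply: eq_bigr => k _.
rewrite mulr_sumr; apply: eq_bigr => i _; rewrite mxE; ring.
Qed.

Section BQ.
Variables (m : nat) (Q : 'rV[int]_m -> int).
Hypothesis HQ : quadratic_form Q.

Lemma BQC y z : BQ Q y z = BQ Q z y.
Proof. rewrite /BQ [y + z]addrC. ring. Qed.

Lemma BQDl y1 y2 z : BQ Q (y1 + y2) z = BQ Q y1 z + BQ Q y2 z.
Proof. by case: HQ. Qed.

Lemma BQDr z y1 y2 : BQ Q z (y1 + y2) = BQ Q z y1 + BQ Q z y2.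
Proof. by rewrite BQC BQDl !(BQC z). Qed.

Lemma BQ0l z : BQ Q 0 z = 0.
Proof. have := BQDl 0 0 z; rewrite addr0; lra. Qed.

Lemma BQNl y z : BQ Q (- y) z = - BQ Q y z.
Proof. have := BQDl y (- y) z; rewrite subrr BQ0l; lra. Qed.

Lemma BQMnl y z k : BQ Q (y *+ k) z = BQ Q y z *+ k.
Proof. elim: k => [|k IH]; first by rewrite !mulr0n BQ0l. by rewrite !mulrS BQDl IH. Qed.

Lemma BQZl (c : int) y z : BQ Q (c *: y) z = c * BQ Q y z.
Proof.
rewrite -[c in c *: _]intz scaler_int.
case: c => k; first by rewrite BQMnl -mulr_natl natz.
rewrite NegzE mulrNz BQNl.
have -> : y *~ k.+1 = y *+ k.+1 by [].
by rewrite BQMnl -mulr_natl natz mulNr.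
Qed.

Lemma BQZr (c : int) y z : BQ Q z (c *: y) = c * BQ Q z y.
Proof. by rewrite BQC BQZl BQC. Qed.

Lemma BQyy y : BQ Q y y = 2 * Q y.
Proof.
case: HQ => HZ _.
rewrite /BQ; have -> : y + y = (2:int) *: y by rewrite scaler_nat mulr2n.
rewrite HZ; lra.
Qed.

Lemma weyl_simple (a v : 'rV[int]_m) :
  (forall y, Q (y - pairing a y *: v) = Q y) -> pairing a v = 2 ->
  forall y, BQ Q y v = pairing a y * Q v.
Proof.
move=> W av.
have gen y : pairing a y != 0 -> BQ Q y v = pairing a y * Q v.
  move=> nz; have := W y; set c := pairing a y => Wy.
  have e1 : Q (y - c *: v) = Q y + Q (- (c *: v)) + BQ Q y (- (c *: v)) by rewrite /BQ; lra.
  have e2 : Q (- (c *: v)) = c ^+ 2 * Q v by rewrite -scaleNr; case: HQ => HZ _; rewrite HZ sqrrN.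
  have e3 : BQ Q y (- (c *: v)) = - c * BQ Q y v by rewrite -scaleNr BQZr.
  rewrite e1 e2 e3 in Wy.
  have : c * (c * Q v - BQ Q y v) = c * 0 by rewrite mulr0; lra.
  move/(mulfI nz) => /eqP; rewrite subr_eq0 => /eqP; lra.
move=> y; have [z0|nz] := eqVneq (pairing a y) 0; last exact: gen.
have := gen (y + v); rewrite pairingDr z0 av add0r BQDl BQyy => /(_ isT).
rewrite mul0r; lra.
Qed.
End BQ.

Ltac ifs := repeat (case: ifP => ?; try (exfalso; lia)); try lia.

Lemma cartan_pt {r l j} : (1 <= j <= r)%N -> (1 <= l <= r)%N ->
  cartanC r l j = (if (l == j.-1) && (1 < j)%N then -1 else 0) + (if l == j then 2 else 0)
    + (if (l == j.+1) && (j < r)%N then (if j.+1 == r then -2 else -1) else 0).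
Proof. move=> Hj Hl; rewrite /cartanC; ifs. Qed.

Lemma sum_cartan r j (F : nat -> int) : (1 <= j <= r)%N ->
  \sum_(1 <= l < r.+1) F l * cartanC r l j =
  (if (1 < j)%N then - F j.-1 else 0) + 2 * F j +
  (if (j < r)%N then (if j.+1 == r then -2 else -1) * F j.+1 else 0).
Proof.
move=> Hj.
under eq_big_nat => l Hl do rewrite (cartan_pt Hj Hl).
under eq_bigr => l _ do rewrite !mulrDr.
rewrite !big_split /=.
rewrite (@sum_nat_pt _ _ _ j.-1); last by move=> k _ /negbTE ->; rewrite mulr0.
rewrite (@sum_nat_pt _ _ _ j); last by move=> k _ /negbTE ->; rewrite mulr0.
rewrite (@sum_nat_pt _ _ _ j.+1); last by move=> k _ /negbTE ->; rewrite mulr0.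
rewrite !eqxx /=; ifs; ring.
Qed.

Goal forall (a b : nat), (2:int) *+ (a - b) = Posz (2 * (a - b)). move=> a b. lia. Qed.

Lemma comb_single r m (v : nat -> 'rV[int]_m) c l : (1 <= l <= r)%N ->
  (forall k, k != l -> c k = 0) -> comb r v c = c l *: v l.
Proof.
move=> Hl Hc; rewrite /comb (@sum_nat_pt _ _ _ l).
  by rewrite ifT //; lia.
by move=> k _ /Hc ->; rewrite scale0r.
Qed.

Section Roots.
Variables (r m : nat) (alpha alphav : nat -> 'rV[int]_m).
Hypothesis Hr : (2 <= r)%N.
Hypothesis Hcart : forall i j, (1 <= i <= r)%N -> (1 <= j <= r)%N ->
     pairing (alpha i) (alphav j) = cartanC r i j.

Lemma rootv_simple l : (1 <= l < r)%N -> rootv r alpha (PI l l.+1) = alpha l.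
Proof.
move=> Hl; rewrite /rootv (@comb_single _ _ _ _ l); first by rewrite /rootc ifT ?scale1r //; lia.
  lia.
by move=> k Hk; rewrite /rootc; ifs.
Qed.

Lemma corootv_simple l : (1 <= l < r)%N -> corootv r alphav (PI l l.+1) = alphav l.
Proof.
move=> Hl; rewrite /corootv (@comb_single _ _ _ _ l); first by rewrite /corootc ifT ?scale1r //; lia.
  lia.
by move=> k Hk; rewrite /corootc; ifs.
Qed.

Lemma rootv_r : rootv r alpha (PIII r) = alpha r.
Proof.
rewrite /rootv (@comb_single _ _ _ _ r); first by rewrite /rootc ifF ?eqxx ?scale1r //; lia.
  lia.
by move=> k Hk; rewrite /rootc; ifs.
Qed.

Lemma corootv_r : corootv r alphav (PIII r) = alphav r.
Proof.
rewrite /corootv (@comb_single _ _ _ _ r); first by rewrite /corootc ifT ?scale1r //; lia.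
  lia.
by move=> k Hk; rewrite /corootc; ifs.
Qed.

Lemma pairing_root_simple p j : (1 <= j <= r)%N ->
  pairing (rootv r alpha p) (alphav j) = \sum_(1 <= l < r.+1) rootc r p l * cartanC r l j.
Proof.
move=> Hj; rewrite /rootv pairing_comb; apply: eq_big_nat => l Hl.
by rewrite Hcart //; lia.
Qed.

Lemma E1 i j : (1 <= i)%N -> (i < j)%N -> (j <= r)%N ->
  pairing (rootv r alpha (PI i j)) (alphav j) = -1.
Proof.
move=> *; rewrite pairing_root_simple ?sum_cartan; try lia.
rewrite /rootc; ifs.
Qed.

Lemma E2 i j : (1 <= i)%N -> (i < j)%N -> (j <= r)%N ->
  pairing (rootv r alpha (PII i j)) (alphav j) = 1.
Proof.
move=> *; rewrite pairing_root_simple ?sum_cartan; try lia.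
rewrite /rootc; ifs.
Qed.

Lemma E3 i : (1 <= i)%N -> (i <= r)%N ->
  pairing (rootv r alpha (PIII i)) (alphav i) = 2.
Proof.
move=> *; rewrite pairing_root_simple ?sum_cartan; try lia.
rewrite /rootc; ifs.
Qed.

Lemma E4 : pairing (alpha r) (alphav r.-1) = -2.
Proof. rewrite Hcart; try lia. rewrite /cartanC; ifs. Qed.

End Roots.

Lemma ndiv n x k : (0 < n)%N -> (n %/ gcdn n x %| k)%N = (n %| k * x)%N.
Proof.
move=> Hn; have g0 : (0 < gcdn n x)%N by rewrite gcdn_gt0 Hn.
rewrite -(dvdn_pmul2r g0) divnK ?dvdn_gcdl // muln_gcdr dvdn_gcd dvdn_mull ?dvdnn //.
Qed.

Lemma ndivz n (x k : int) : (0 < n)%N -> ((n %/ gcdn n `|x|)%N%:Z %| k)%Z = (n%:Z %| k * x)%Z.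
Proof. by move=> Hn; rewrite !dvdzE abszM /= ndiv. Qed.

Lemma nt_eq (a b : nat) (P : int -> Prop) :
  (forall k, (a%:Z %| k)%Z <-> P k) -> (forall k, (b%:Z %| k)%Z <-> P k) -> a = b.
Proof.
move=> Ha Hb; apply/eqP; rewrite eqn_dvd.
have := (proj2 (Ha b%:Z) (proj1 (Hb b%:Z) (dvdzz _))).
have := (proj2 (Hb a%:Z) (proj1 (Ha a%:Z) (dvdzz _))).
by rewrite !dvdzE /= => -> ->.
Qed.


Section Sums.
Variables (r i j : nat).
Hypothesis Hij : (1 <= i < j)%N.
Hypothesis Hjr : (j <= r)%N.

Lemma sPI : \sum_(1 <= k < r) corootc r (PI i j) k = Posz (j - i).
Proof.
rewrite (@big_cat_nat _ _ _ i 1 r) ?(@big_cat_nat _ _ _ j i r) //=; try lia.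
rewrite (@sum_nat_cst _ 1 i 0) ?(@sum_nat_cst _ i j 1) ?(@sum_nat_cst _ j r 0); try (move=> k Hk; rewrite /corootc; ifs).
lia.
Qed.

Lemma sPII : \sum_(1 <= k < r) corootc r (PII i j) k = Posz ((j - i) + 2 * (r - j)).
Proof.
rewrite (@big_cat_nat _ _ _ i 1 r) ?(@big_cat_nat _ _ _ j i r) //=; try lia.
rewrite (@sum_nat_cst _ 1 i 0) ?(@sum_nat_cst _ i j 1) ?(@sum_nat_cst _ j r 2); try (move=> k Hk; rewrite /corootc; ifs).
lia.
Qed.

Lemma hPI : \sum_(1 <= k < r.+1) rootc r (PI i j) k = Posz (j - i).
Proof.
rewrite (@big_cat_nat _ _ _ i 1 r.+1) ?(@big_cat_nat _ _ _ j i r.+1) //=; try lia.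
rewrite (@sum_nat_cst _ 1 i 0) ?(@sum_nat_cst _ i j 1) ?(@sum_nat_cst _ j r.+1 0); try (move=> k Hk; rewrite /rootc; ifs).
lia.
Qed.

Lemma hPII : \sum_(1 <= k < r.+1) rootc r (PII i j) k = Posz ((j - i) + 2 * (r - j) + 1).
Proof.
rewrite (@big_cat_nat _ _ _ i 1 r.+1) ?(@big_cat_nat _ _ _ j i r.+1) ?(@big_cat_nat _ _ _ r j r.+1) //=; try lia.
rewrite (@sum_nat_cst _ 1 i 0) ?(@sum_nat_cst _ i j 1) ?(@sum_nat_cst _ j r 2) ?(@sum_nat_cst _ r r.+1 1); try (move=> k Hk; rewrite /rootc; ifs).
lia.
Qed.

Lemma cPI : corootc r (PI i j) r = 0. Proof. rewrite /corootc; ifs. Qed.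
Lemma cPII : corootc r (PII i j) r = 2. Proof. rewrite /corootc; ifs. Qed.
End Sums.

Section Sums3.
Variables (r i : nat).
Hypothesis Hi : (1 <= i <= r)%N.

Lemma sPIII : \sum_(1 <= k < r) corootc r (PIII i) k = Posz (r - i).
Proof.
rewrite (@big_cat_nat _ _ _ i 1 r) //=; try lia.
rewrite (@sum_nat_cst _ 1 i 0) ?(@sum_nat_cst _ i r 1); try (move=> k Hk; rewrite /corootc; ifs).
lia.
Qed.

Lemma hPIII : \sum_(1 <= k < r.+1) rootc r (PIII i) k = Posz (2 * (r - i) + 1).
Proof.
rewrite (@big_cat_nat _ _ _ i 1 r.+1) ?(@big_cat_nat _ _ _ r i r.+1) //=; try lia.
rewrite (@sum_nat_cst _ 1 i 0) ?(@sum_nat_cst _ i r 2) ?(@sum_nat_cst _ r r.+1 1); try (move=> k Hk; rewrite /rootc; ifs).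
lia.
Qed.

Lemma cPIII : corootc r (PIII i) r = 1. Proof. rewrite /corootc; ifs. Qed.
End Sums3.


Definition mp (p : proot) : int := if p is PIII _ then 1 else 2.

Lemma coroot_root r p l : isPos r p -> (1 <= l <= r)%N ->
  corootc r p l * (if (l < r)%N then 2 else 1) = mp p * rootc r p l.
Proof.
case: p => [i j|i j|i]; rewrite /isPos /isI /isII /isIII /= => H Hl;
  rewrite /corootc /rootc; ifs.
Qed.

Section Main.
Variables (r m n : nat) (alpha alphav : nat -> 'rV[int]_m)
  (Q : 'rV[int]_m -> int) (nt : 'rV[int]_m -> nat).
Hypothesis Hr : (2 <= r)%N.
Hypothesis Hn : (0 < n)%N.
Hypothesis Hcart : forall i j, (1 <= i <= r)%N -> (1 <= j <= r)%N ->
     pairing (alpha i) (alphav j) = cartanC r i j.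
Hypothesis HQ : quadratic_form Q.
Hypothesis HW : weyl_invariant r alpha alphav Q.
Hypothesis Hnt : forall (y : 'rV[int]_m) (k : int), inYQn Q n (k *: y) <-> ((nt y)%:Z %| k)%Z.

Lemma Bsimple l : (1 <= l <= r)%N ->
  forall y, BQ Q y (alphav l) = pairing (alpha l) y * Q (alphav l).
Proof.
move=> Hl; apply: (@weyl_simple _ _ HQ (alpha l) (alphav l)); last by rewrite Hcart // /cartanC eqxx.
have [Hlr|Hlr] : (l < r)%N \/ l = r by lia.
  have Hp : isPos r (PI l l.+1) by rewrite /isPos /isI /=; lia.
  have e1 : rootv r alpha (PI l l.+1) = alpha l by apply: rootv_simple; lia.
  have e2 : corootv r alphav (PI l l.+1) = alphav l by apply: corootv_simple; lia.
  by move=> y; have := HW _ Hp y; rewrite e1 e2.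
have Hp : isPos r (PIII r) by rewrite /isPos /isIII /=; lia.
have e1 : rootv r alpha (PIII r) = alpha r by apply: rootv_r; lia.
have e2 : corootv r alphav (PIII r) = alphav r by apply: corootv_r; lia.
by move=> y; have := HW _ Hp y; rewrite e1 e2 Hlr.
Qed.

Lemma Qsymm i j : (1 <= i <= r)%N -> (1 <= j <= r)%N ->
  cartanC r i j * Q (alphav i) = cartanC r j i * Q (alphav j).
Proof.
move=> Hi Hj; rewrite -Hcart // -Hcart // -Bsimple // -Bsimple //; exact: BQC.
Qed.

Let q := Q (alphav r).

Lemma Qrel l : (1 <= l < r)%N -> Q (alphav l) = 2 * q.
Proof.
move=> Hl.
suff H : forall t l, (l + t = r.-1)%N -> (1 <= l)%N -> Q (alphav l) = 2 * q.
  apply: (H (r.-1 - l)%N); lia.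
clear Hl l; elim=> [|t IH] l Hlt H1.
  have := Qsymm l r; rewrite /cartanC.
  have -> : (l == r) = false by lia.
  have -> : (r == r.-1) = false by lia.
  have -> : (l == r.+1) = false by lia.
  have -> : (r == l.+1) = true by lia.
  have -> : (r == l) = false by lia.
  have -> : (l == r.-1) = true by lia.
  rewrite /= /q => /(_ ltac:(lia) ltac:(lia)); rewrite eqxx /=; lra.
have := Qsymm l l.+1; rewrite /cartanC.
have -> : (l == l.+1) = false by lia.
have -> : (l.+1 == l) = false by lia.
have -> : (l.+1 == l.+1) = true by lia.
have -> : (l == r) = false by lia.
have -> : (l.+1 == r) = false by lia.
rewrite /= (IH l.+1) //; try lia.
move=> /(_ ltac:(lia) ltac:(lia)); rewrite orbT; lra.
Qed.

Lemma BQ_comb z (c : nat -> int) :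
  BQ Q z (comb r alphav c) = \sum_(1 <= k < r.+1) c k * BQ Q z (alphav k).
Proof.
have h0 : BQ Q z 0 = 0 by rewrite BQC (@BQ0l _ _ HQ).
rewrite /comb (big_morph (BQ Q z) (@BQDr _ _ HQ z) h0).
by apply: eq_bigr => k _; rewrite (@BQZr _ _ HQ).
Qed.

Lemma Bcoroot p : isPos r p -> forall z,
  BQ Q z (corootv r alphav p) = q * mp p * pairing (rootv r alpha p) z.
Proof.
move=> Hp z; rewrite /corootv BQ_comb /rootv pairing_comb mulr_sumr.
apply: eq_big_nat => l Hl.
have Hl' : (1 <= l <= r)%N by lia.
rewrite Bsimple //.
have -> : Q (alphav l) = (if (l < r)%N then 2 else 1) * q.
  case: ifP => H; first by rewrite Qrel //; lia.
  have -> : l = r by lia. by rewrite mul1r.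
have K := @coroot_root r p l Hp Hl'.
transitivity ((corootc r p l * (if (l < r)%N then 2 else 1)) * pairing (alpha l) z * q).
  ring.
rewrite K; ring.
Qed.

Lemma ntchar p : isPos r p -> forall k,
  ((nt (corootv r alphav p))%:Z %| k)%Z <->
  (forall z, (n%:Z %| k * (q * mp p * pairing (rootv r alpha p) z))%Z).
Proof.
move=> Hp k; rewrite -Hnt /inYQn; split=> H z; move: (H z);
  by rewrite (@BQZl _ _ HQ) BQC Bcoroot.
Qed.

Lemma short p : isI r p || isII r p -> forall k,
  ((nt (corootv r alphav p))%:Z %| k)%Z <-> (n%:Z %| k * (q * 2))%Z.
Proof.
move=> Hp.
have Hp' : isPos r p by rewrite /isPos; case/orP: Hp => ->; rewrite ?orbT.
have Hm : mp p = 2 by case: p Hp {Hp'}.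
have [z0 Hz0] : exists z0, pairing (rootv r alpha p) z0 ^+ 2 = 1.
  case: p Hp {Hp' Hm} => [i j|i j|i]; rewrite /isI /isII /= => H.
  - exists (alphav j); rewrite (@E1 _ _ _ _ Hr Hcart i j) //; lia.
  - exists (alphav j); rewrite (@E2 _ _ _ _ Hr Hcart i j) //; lia.
  - by [].
move=> k; rewrite ntchar // Hm; split => [H | H z].
  have := dvdz_mulr (pairing (rootv r alpha p) z0) (H z0).
  have -> : k * (q * 2 * pairing (rootv r alpha p) z0) * pairing (rootv r alpha p) z0
     = k * (q * 2) * pairing (rootv r alpha p) z0 ^+ 2 by ring.
  by rewrite Hz0 mulr1.
have -> : k * (q * 2 * pairing (rootv r alpha p) z) = k * (q * 2) * pairing (rootv r alpha p) z by ring.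
exact: dvdz_mulr.
Qed.

Lemma long i : (1 <= i <= r)%N -> forall k,
  ((nt (corootv r alphav (PIII i)))%:Z %| k)%Z <->
  ((n%:Z %| k * (q * 2))%Z /\ forall z, (n%:Z %| k * (q * pairing (alpha r) z))%Z).
Proof.
move=> Hi.
have Hp : isPos r (PIII i) by rewrite /isPos /isIII /=; lia.
have dec z : pairing (rootv r alpha (PIII i)) z =
  2 * (\sum_(1 <= l < r) (if (i <= l)%N then 1 else 0) * pairing (alpha l) z) + pairing (alpha r) z.
  rewrite /rootv pairing_comb big_nat_recr; last lia.
  have -> : rootc r (PIII i) r = 1 by rewrite /rootc; ifs.
  rewrite mul1r mulr_sumr; congr (_ + _); apply: eq_big_nat => l Hl.
  rewrite /rootc; repeat (case: ifP => ?); try ring; exfalso; lia.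
move=> k; rewrite ntchar //=.
have H1iff : (forall z, (n%:Z %| k * (q * 1 * pairing (rootv r alpha (PIII i)) z))%Z) ->
   (n%:Z %| k * (q * 2))%Z.
  move=> H; have := H (alphav i); rewrite (@E3 _ _ _ _ Hr Hcart i) ?mulr1 //; lia.
split => [H | [H1 H2] z].
  split; first exact: H1iff.
  move=> z; have := H z; rewrite dec => Hz.
  set X := \sum_(1 <= l < r) _ in Hz.
  have -> : k * (q * pairing (alpha r) z) =
    k * (q * 1 * (2 * X + pairing (alpha r) z)) - k * (q * 2) * X by ring.
  by rewrite rpredB // dvdz_mulr // H1iff.
rewrite dec; set X := \sum_(1 <= l < r) _.
have -> : k * (q * 1 * (2 * X + pairing (alpha r) z)) =
    k * (q * 2) * X + k * (q * pairing (alpha r) z) by ring.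
by rewrite rpredD // dvdz_mulr.
Qed.

Local Notation S := (nt (alphav 1%N)).
Local Notation Lg := (nt (alphav r)).

Lemma e1 : corootv r alphav (PI 1 2) = alphav 1.
Proof. apply: corootv_simple; lia. Qed.
Lemma er : corootv r alphav (PIII r) = alphav r.
Proof. apply: corootv_r; lia. Qed.

Lemma FS k : (S%:Z %| k)%Z <-> (n%:Z %| k * (q * 2))%Z.
Proof. rewrite -e1; apply: short; rewrite /isI /=; lia. Qed.

Lemma FL k : (Lg%:Z %| k)%Z <->
  ((n%:Z %| k * (q * 2))%Z /\ forall z, (n%:Z %| k * (q * pairing (alpha r) z))%Z).
Proof. rewrite -er; apply: long; lia. Qed.

Lemma nt_short p : isI r p || isII r p -> nt (corootv r alphav p) = S.
Proof. move=> Hp; apply: nt_eq; [exact: short | exact: FS]. Qed.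

Lemma nt_long i : (1 <= i <= r)%N -> nt (corootv r alphav (PIII i)) = Lg.
Proof. move=> Hi; apply: nt_eq; [exact: long | exact: FL]. Qed.

Lemma nt_simple l : (1 <= l < r)%N -> nt (alphav l) = S.
Proof.
move=> Hl; have <- : corootv r alphav (PI l l.+1) = alphav l by apply: corootv_simple; lia.
apply: nt_short; rewrite /isI /=; lia.
Qed.

Lemma S_gt0 : (0 < S)%N.
Proof.
have := proj2 (FS n) (dvdz_mulr (q * 2) (dvdzz n)).
by rewrite dvdzE /= => /dvdn_gt0; apply.
Qed.

Lemma Lg_gt0 : (0 < Lg)%N.
Proof.
have := proj2 (FL n) (conj (dvdz_mulr (q * 2) (dvdzz n)) (fun z => dvdz_mulr _ (dvdzz n))).
by rewrite dvdzE /= => /dvdn_gt0; apply.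
Qed.

Lemma fX_form p : fX r alphav nt p =
  (\sum_(1 <= k < r) corootc r p k)%:~R / S%:R + (corootc r p r)%:~R / Lg%:R.
Proof.
rewrite /fX big_nat_recr /=; last lia.
congr (_ + _); rewrite rmorph_sum mulr_suml; apply: eq_big_nat => k Hk.
by rewrite nt_simple.
Qed.

Lemma intrP (x : nat) : ((Posz x)%:~R : rat) = x%:R.
Proof. by rewrite -pmulrn. Qed.

Section Vals.
Variables (i j : nat).
Hypothesis Hij : (1 <= i < j)%N.
Hypothesis Hjr : (j <= r)%N.

Lemma vX_PI : fX r alphav nt (PI i j) = (j - i)%:R / S%:R.
Proof. by rewrite fX_form sPI // cPI // intrP mul0r addr0. Qed.

Lemma vX_PII : fX r alphav nt (PII i j) = ((j - i) + 2 * (r - j))%:R / S%:R + 2%:R / Lg%:R.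
Proof. by rewrite fX_form sPII // cPII // intrP. Qed.

Lemma vY_PI : fY r alphav nt (PI i j) = (j - i)%:R / S%:R.
Proof. rewrite /fY hPI // intrP nt_short //; rewrite /isI /=; lia. Qed.

Lemma vY_PII : fY r alphav nt (PII i j) = ((j - i) + 2 * (r - j) + 1)%:R / S%:R.
Proof. rewrite /fY hPII // intrP nt_short //; rewrite /isII /=; lia. Qed.
End Vals.

Lemma vX_PIII i : (1 <= i <= r)%N -> fX r alphav nt (PIII i) = (r - i)%:R / S%:R + 1 / Lg%:R.
Proof. by move=> Hi; rewrite fX_form sPIII // cPIII // intrP. Qed.

Lemma vY_PIII i : (1 <= i <= r)%N -> fY r alphav nt (PIII i) = (2 * (r - i) + 1)%:R / Lg%:R.
Proof. by move=> Hi; rewrite /fY hPIII // intrP nt_long. Qed.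

Lemma img_eq (C : proot -> bool) : (forall p, C p -> isPos r p) ->
  (forall p, isPos r p -> fX r alphav nt p = fY r alphav nt p) ->
  seteq (fX_img r alphav nt C) (fY_img r alphav nt C).
Proof.
move=> HC HE x; split=> -[p [Cp ->]]; exists p; split => //; rewrite HE //; exact: HC.
Qed.

Lemma part1 :
  (forall i, (1 <= i < r)%N -> (2 * nt (alphav i) = nt (alphav r))%N) ->
    (forall i, (1 <= i <= r)%N -> nt (alphav i) = n_of Q n (alphav i)) /\
    seteq (fX_img r alphav nt (isIII r)) (fY_img r alphav nt (isIII r)) /\
    seteq (fX_img r alphav nt (isI r)) (fY_img r alphav nt (isI r)) /\
    seteq (fX_img r alphav nt (isII r)) (fY_img r alphav nt (isII r)) /\
    seteq (fX_img r alphav nt (isPos r))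
          (fun q => intdiv_set 1 (2 * r - 1) (2 * (n_of Q n (alphav 1%N))%:R) q \/
                    intdiv_set 2 (2 * r - 2) (n_of Q n (alphav 1%N))%:R q) /\
    seteq (fun q => intdiv_set 1 (2 * r - 1) (2 * (n_of Q n (alphav 1%N))%:R) q \/
                    intdiv_set 2 (2 * r - 2) (n_of Q n (alphav 1%N))%:R q)
          (fY_img r alphav nt (isPos r)).
Proof.
move=> H1.
have HL : Lg = (2 * S)%N by symmetry; apply: H1; lia.
have hS : (S%:R : rat) != 0 by rewrite pnatr_eq0 -lt0n S_gt0.
have HSn : S = n_of Q n (alphav 1%N).
  rewrite /n_of Qrel; last lia.
  apply: (@nt_eq _ _ (fun k => (n%:Z %| k * (q * 2))%Z)); first exact: FS.
  by move=> k; rewrite ndivz // [2 * q]mulrC.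
have Ha : forall i, (1 <= i <= r)%N -> nt (alphav i) = n_of Q n (alphav i).
  move=> i Hi; have [Hir|->] : (i < r)%N \/ i = r by lia.
    rewrite nt_simple; last lia.
    by rewrite HSn /n_of !Qrel //; lia.
  set M := n_of Q n (alphav r).
  have HM : (n%:Z %| M%:Z * q)%Z by rewrite -ndivz // dvdzz.
  apply/eqP; rewrite eqn_dvd; apply/andP; split.
    have h1 : (n%:Z %| M%:Z * (q * 2))%Z by rewrite mulrA dvdz_mulr.
    have h2 : forall z, (n%:Z %| M%:Z * (q * pairing (alpha r) z))%Z.
      by move=> z; rewrite mulrA dvdz_mulr.
    have := proj2 (FL M) (conj h1 h2).
    by rewrite dvdzE.
  have : (M%:Z %| Lg%:Z)%Z.
    rewrite /M /n_of ndivz // HL PoszM.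
    have -> : 2%:Z * S%:Z * Q (alphav r) = S%:Z * (q * 2) by rewrite /q; ring.
    by apply/FS; exact: dvdzz.
  by rewrite dvdzE.
have eqXY : forall p, isPos r p -> fX r alphav nt p = fY r alphav nt p.
  case=> [i j|i j|i]; rewrite /isPos /isI /isII /isIII /= => Hp.
  - by rewrite vX_PI ?vY_PI //; lia.
  - rewrite vX_PII ?vY_PII; try lia.
    by rewrite HL !natrM !natrD; field.
  - rewrite vX_PIII ?vY_PIII; try lia.
    by rewrite HL !natrM !natrD; field.
have HN : n_of Q n (alphav 1%N) = S by rewrite -Ha //; lia.
have Himg : seteq (fX_img r alphav nt (isPos r))
          (fun q => intdiv_set 1 (2 * r - 1) (2 * (n_of Q n (alphav 1%N))%:R) q \/
                    intdiv_set 2 (2 * r - 2) (n_of Q n (alphav 1%N))%:R q).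
  rewrite HN => x; split.
    case=> -[i j|i j|i] []; rewrite /isPos /isI /isII /isIII /= => Hp ->.
    - left; exists (2 * (j - i))%N; split; first lia.
      by rewrite vX_PI ?natrM; try lia; field.
    - right; exists ((j - i) + 2 * (r - j) + 1)%N; split; first lia.
      by rewrite vX_PII; try lia; rewrite HL !natrM !natrD; field.
    - left; exists (2 * (r - i) + 1)%N; split; first lia.
      by rewrite vX_PIII; try lia; rewrite HL !natrM !natrD; field.
  case=> -[k [Hk ->]].
    have [t [Ht|Ht]] : exists t, (k = 2 * t + 1)%N \/ (k = 2 * t)%N.
      exists k./2; have := odd_double_half k; case: (odd k) => /= Hk'; lia.
    - exists (PIII (r - t)); split; first by rewrite /isPos /isIII /=; lia.
      rewrite vX_PIII; last lia.
      have -> : (r - (r - t))%N = t by lia.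
      by rewrite HL Ht !natrM !natrD; field.
    - exists (PI 1 t.+1); split; first by rewrite /isPos /isI /=; lia.
      rewrite vX_PI; try lia.
      have -> : (t.+1 - 1)%N = t by lia.
      by rewrite Ht !natrM; field.
  have [i [j [Hij [Hjr Hk']]]] : exists i j, (1 <= i < j)%N /\ (j <= r)%N /\ k = ((j - i) + 2 * (r - j) + 1)%N.
    have [Hkr|Hkr] : (r <= k)%N \/ (k < r)%N by lia.
      by exists 1%N, (2 * r - k)%N; lia.
    by exists (r.+1 - k)%N, r; lia.
  exists (PII i j); split; first by rewrite /isPos /isII /=; lia.
  by rewrite vX_PII // Hk' HL !natrM !natrD; field.
split => //; split; first by apply: img_eq => // p; rewrite /isPos => ->; rewrite ?orbT.
split; first by apply: img_eq => // p; rewrite /isPos => ->; rewrite ?orbT.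
split; first by apply: img_eq => // p; rewrite /isPos => ->; rewrite ?orbT.
split => // x; rewrite -(Himg x).
by have := @img_eq (isPos r) (fun p H => H) eqXY x.
Qed.

Lemma part2 :
  (forall i j, (1 <= i <= r)%N -> (1 <= j <= r)%N -> nt (alphav i) = nt (alphav j)) ->
    seteq (fX_img r alphav nt (isPos r)) (intdiv_set 1 (2 * r - 1) (nt (alphav 1%N))%:R) /\
    seteq (intdiv_set 1 (2 * r - 1) (nt (alphav 1%N))%:R) (fY_img r alphav nt (isPos r)).
Proof.
move=> H2.
have HL : Lg = S by apply: H2; lia.
have hS : (S%:R : rat) != 0 by rewrite pnatr_eq0 -lt0n S_gt0.
split => x; split.
- case=> -[i j|i j|i] []; rewrite /isPos /isI /isII /isIII /= => Hp ->.
  + exists (j - i)%N; split; first lia.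
    by rewrite vX_PI //; lia.
  + exists ((j - i) + 2 * (r - j) + 2)%N; split; first lia.
    by rewrite vX_PII; try lia; rewrite HL -mulrDl -natrD.
  + exists (r - i + 1)%N; split; first lia.
    by rewrite vX_PIII; try lia; rewrite HL !natrD; field.
- case=> k [Hk ->].
  have [Hkr|Hkr] : (k <= r)%N \/ (r < k)%N by lia.
    exists (PIII (r.+1 - k)); split; first by rewrite /isPos /isIII /=; lia.
    rewrite vX_PIII; last lia.
    set u := (r - (r.+1 - k))%N.
    have -> : k = (u + 1)%N by rewrite /u; lia.
    by rewrite HL !natrD; field.
  exists (PII 1 (2 * r + 1 - k)); split; first by rewrite /isPos /isII /=; lia.
  rewrite vX_PII; try lia.
  set u := (2 * r + 1 - k)%N.
  have -> : k = ((u - 1) + 2 * (r - u) + 2)%N by rewrite /u; lia.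
  by rewrite HL natrD mulrDl.
- case=> k [Hk ->].
  have [t [Ht|Ht]] : exists t, (k = 2 * t + 1)%N \/ (k = 2 * t)%N.
    exists k./2; have := odd_double_half k; case: (odd k) => /= Hk'; lia.
  + exists (PIII (r - t)); split; first by rewrite /isPos /isIII /=; lia.
    rewrite vY_PIII; last lia.
    have -> : (r - (r - t))%N = t by lia.
    by rewrite HL Ht.
  + have [i [j [Hij [Hjr Hk']]]] : exists i j, (1 <= i < j)%N /\ (j <= r)%N /\ k = ((j - i) + 2 * (r - j) + 1)%N.
      have [Hkr|Hkr] : (r <= k)%N \/ (k < r)%N by lia.
        by exists 1%N, (2 * r - k)%N; lia.
      by exists (r.+1 - k)%N, r; lia.
    exists (PII i j); split; first by rewrite /isPos /isII /=; lia.
    by rewrite vY_PII // Hk'.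
- case=> -[i j|i j|i] []; rewrite /isPos /isI /isII /isIII /= => Hp ->.
  + exists (j - i)%N; split; first lia.
    by rewrite vY_PI //; lia.
  + exists ((j - i) + 2 * (r - j) + 1)%N; split; first lia.
    by rewrite vY_PII //; lia.
  + exists (2 * (r - i) + 1)%N; split; first lia.
    by rewrite vY_PIII ?HL //; lia.
Qed.

End Main.

Theorem lemma3p3 (r m n : nat) (alpha alphav : nat -> 'rV[int]_m)
  (Q : 'rV[int]_m -> int) (nt : 'rV[int]_m -> nat) :
  (2 <= r)%N -> (0 < n)%N ->
  (* root datum of type C_r (Bourbaki labelling) *)
  (forall i j, (1 <= i <= r)%N -> (1 <= j <= r)%N ->
     pairing (alpha i) (alphav j) = cartanC r i j) ->
  quadratic_form Q -> weyl_invariant r alpha alphav Q ->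
  (* nt y is the positive generator: Z y  cap  Y_{Q,n} = Z (nt y) y *)
  (forall (y : 'rV[int]_m) (k : int), inYQn Q n (k *: y) <-> ((nt y)%:Z %| k)%Z) ->
  ( (forall i, (1 <= i < r)%N -> (2 * nt (alphav i) = nt (alphav r))%N) ->
    (forall i, (1 <= i <= r)%N -> nt (alphav i) = n_of Q n (alphav i)) /\
    seteq (fX_img r alphav nt (isIII r)) (fY_img r alphav nt (isIII r)) /\
    seteq (fX_img r alphav nt (isI r)) (fY_img r alphav nt (isI r)) /\
    seteq (fX_img r alphav nt (isII r)) (fY_img r alphav nt (isII r)) /\
    seteq (fX_img r alphav nt (isPos r))
          (fun q => intdiv_set 1 (2 * r - 1) (2 * (n_of Q n (alphav 1%N))%:R) q \/
                    intdiv_set 2 (2 * r - 2) (n_of Q n (alphav 1%N))%:R q) /\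
    seteq (fun q => intdiv_set 1 (2 * r - 1) (2 * (n_of Q n (alphav 1%N))%:R) q \/
                    intdiv_set 2 (2 * r - 2) (n_of Q n (alphav 1%N))%:R q)
          (fY_img r alphav nt (isPos r)) ) /\
  ( (forall i j, (1 <= i <= r)%N -> (1 <= j <= r)%N -> nt (alphav i) = nt (alphav j)) ->
    seteq (fX_img r alphav nt (isPos r)) (intdiv_set 1 (2 * r - 1) (nt (alphav 1%N))%:R) /\
    seteq (intdiv_set 1 (2 * r - 1) (nt (alphav 1%N))%:R) (fY_img r alphav nt (isPos r)) ).
Proof.
move=> Hr Hn Hcart HQ HW Hnt.
split; [exact: (@part1 r m n alpha alphav Q nt Hr Hn Hcart HQ HW Hnt) | exact: (@part2 r m n alpha alphav Q nt Hr Hn Hcart HQ HW Hnt)].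
Qed.
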